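(* Let ${\mathbf{x}}^* \in \mathbb{R}^n$ with ${\mathbf{x}}^* \geq 0$ componentwise, and let $\mathcal{J} = \mathrm{supp}({\mathbf{x}}^* )$, so ${\mathbf{x}}^* = \sum_{j\in\mathcal{J}} x_j^* {\mathbf{e}}_j$. Assume there exists a vector ${\mathbf{c}} \in \mathbb{R}^n$ such that $$\frac{P {\mathbf{e}}_j}{\| P {\mathbf{e}}_j \|_2} \cdot {\mathbf{c}} = 1 \quad \forall j \in \mathcal{J}, \qquad \frac{P {\mathbf{e}}_i}{\| P {\mathbf{e}}_i \|_2} \cdot {\mathbf{c}} < 1 \quad \forall i \in \mathcal{J}^c.$$ Let $s \in [\|{\mathbf{x}}^*\|_\infty, \infty]$. Then every solution ${\mathbf{y}}$ of $$\min_{0 \leq {\mathbf{x}} \leq s} \| W {\mathbf{x}} \|_1 \quad \text{subject to} \quad A {\mathbf{x}} = A {\mathbf{x}}^* \qquad (\ast)$$ satisfies $\mathrm{supp}({\mathbf{y}}) \subseteq \mathrm{supp}({\mathbf{x}}^* )$. Moreover, ${\mathbf{x}}^*$ is a solution of $(\ast)$.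
   Context: $A \in \mathbb{R}^{m\times n}$ is a matrix, $A^\dagger$ its Moore–Penrose pseudoinverse, and $P = A^\dagger A$ the orthogonal projection of $\mathbb{R}^n$ onto $\mathcal{N}(A)^\perp$. ${\mathbf{e}}_1,\dots,{\mathbf{e}}_n$ are the standard unit vectors, and it is assumed that no ${\mathbf{e}}_i$ lies in $\mathcal{N}(A)$, so $w_i := \|P{\mathbf{e}}_i\|_2 > 0$ for all $i$. $W = \mathrm{diag}(w_1,\dots,w_n)$. The constraint $0 \le {\mathbf{x}} \le s$ is componentwise; $s=\infty$ means only ${\mathbf{x}}\ge 0$ is imposed. $\mathcal{J}^c$ denotes the complement of $\mathcal{J}$ in $\{1,\dots,n\}$. *)

(* Defs.v *)
From HB Require Import structures.
From mathcomp Require Import all_boot all_order all_algebra.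
From mathcomp Require Import reals constructive_ereal.
Set Implicit Arguments. Unset Strict Implicit. Unset Printing Implicit Defensive.
Import Order.TTheory GRing.Theory Num.Theory.
Local Open Scope ring_scope.

Definition is_MP_pinv (R : realType) (m n : nat)
  (A : 'M[R]_(m, n)) (Ad : 'M[R]_(n, m)) : Prop :=
  [/\ A *m Ad *m A = A, Ad *m A *m Ad = Ad,
      (A *m Ad)^T = A *m Ad & (Ad *m A)^T = Ad *m A].

Definition norm2 (R : realType) (n : nat) (v : 'cV[R]_n) : R :=
  Num.sqrt (\sum_(k < n) v k 0 ^+ 2).

Definition dotv (R : realType) (n : nat) (u v : 'cV[R]_n) : R :=
  \sum_(k < n) u k 0 * v k 0.

Definition evec (R : realType) (n : nat) (i : 'I_n) : 'cV[R]_n :=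
  \col_(k < n) (if k == i then 1 else 0).

Definition wt (R : realType) (n : nat) (P : 'M[R]_n) (i : 'I_n) : R :=
  norm2 (P *m evec R i).

Definition wl1 (R : realType) (n : nat) (P : 'M[R]_n) (x : 'cV[R]_n) : R :=
  \sum_(i < n) `|wt P i * x i 0|.

Definition infnorm (R : realType) (n : nat) (x : 'cV[R]_n) : R :=
  \big[Num.max/0]_(i < n) `|x i 0|.

Definition supp (R : realType) (n : nat) (x : 'cV[R]_n) : {set 'I_n} :=
  [set i | x i 0 != 0].

Definition feasible (R : realType) (m n : nat) (A : 'M[R]_(m, n))
  (b : 'cV[R]_m) (s : \bar R) (x : 'cV[R]_n) : Prop :=
  A *m x = b /\ forall i, 0 <= x i 0 /\ ((x i 0)%:E <= s)%E.

Definition is_solution (R : realType) (m n : nat) (A : 'M[R]_(m, n))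
  (Ad : 'M[R]_(n, m)) (b : 'cV[R]_m) (s : \bar R) (y : 'cV[R]_n) : Prop :=
  feasible A b s y /\
  forall z, feasible A b s z -> wl1 (Ad *m A) y <= wl1 (Ad *m A) z.

(* Main.v *)
Require Import Defs.
From mathcomp Require Import all_boot all_order all_algebra.
From mathcomp Require Import reals constructive_ereal.
Import Order.TTheory GRing.Theory Num.Theory.
Local Open Scope ring_scope.

Lemma mulevec (R : realType) (n : nat) (P : 'M[R]_n) i k :
  (P *m evec R i) k 0 = P k i.
Proof.
rewrite mxE (bigD1 i) //= mxE eqxx mulr1 big1 ?addr0 // => j /negbTE Hj.
by rewrite mxE Hj mulr0.
Qed.

Lemma gE (R : realType) (n : nat) (P : 'M[R]_n) c i : wt P i != 0 ->
  wt P i * dotv ((wt P i)^-1 *: (P *m evec R i)) c = \sum_k P k i * c k 0.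
Proof.
move=> w0; rewrite /dotv mulr_sumr; apply: eq_bigr => k _.
by rewrite mxE mulevec mulrA mulrA mulfV // mul1r.
Qed.

Lemma gsum (R : realType) (n : nat) (P : 'M[R]_n) (c z : 'cV[R]_n) :
  \sum_i (\sum_k P k i * c k 0) * z i 0 = dotv (P *m z) c.
Proof.
rewrite /dotv; under eq_bigr do rewrite mulr_suml.
rewrite exchange_big /=; apply: eq_bigr => k _.
rewrite mxE mulr_suml; apply: eq_bigr => i _.
by rewrite mulrAC.
Qed.

Lemma wt_ge0 (R : realType) (n : nat) (P : 'M[R]_n) i : 0 <= wt P i.
Proof. exact: sqrtr_ge0. Qed.

Lemma wt_neq0 (R : realType) (m n : nat) (A : 'M[R]_(m, n)) Ad i :
  is_MP_pinv A Ad -> A *m evec R i != 0 -> wt (Ad *m A) i != 0.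
Proof.
case=> H1 _ _ _ HA; apply: contra HA; rewrite /wt /norm2 sqrtr_eq0 => Hs.
have H0 : \sum_(k < n) ((Ad *m A) *m evec R i) k 0 ^+ 2 = 0.
  by apply/eqP; rewrite eq_le Hs sumr_ge0 // => k _; rewrite sqr_ge0.
have HP : (Ad *m A) *m evec R i = 0.
  apply/matrixP => k j; rewrite (ord1 j) [RHS]mxE.
  apply/eqP; rewrite -sqrf_eq0; apply/eqP.
  by apply: (psumr_eq0P _ H0) => // l _; rewrite sqr_ge0.
by rewrite -H1 -!mulmxA (mulmxA Ad A) HP !mulmx0.
Qed.

Theorem theorem1 (R : realType) (m n : nat) (A : 'M[R]_(m, n))
  (Ad : 'M[R]_(n, m)) (xs c : 'cV[R]_n) (s : \bar R) :
  is_MP_pinv A Ad ->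
  (forall i : 'I_n, A *m evec R i != 0) ->
  (forall i, 0 <= xs i 0) ->
  (forall j, j \in supp xs ->
     dotv ((wt (Ad *m A) j)^-1 *: ((Ad *m A) *m evec R j)) c = 1) ->
  (forall i, i \notin supp xs ->
     dotv ((wt (Ad *m A) i)^-1 *: ((Ad *m A) *m evec R i)) c < 1) ->
  ((infnorm xs)%:E <= s)%E ->
  (forall y, is_solution A Ad (A *m xs) s y -> supp y \subset supp xs)
  /\ is_solution A Ad (A *m xs) s xs.
Proof.
move=> HMP HA Hxs H1 H2 Hs.
set P := Ad *m A.
set w := wt P.
set u := fun i => dotv ((w i)^-1 *: (P *m evec R i)) c.
have wn0 i : w i != 0 by exact: wt_neq0.
have w0 i : 0 < w i by rewrite lt_def wn0 wt_ge0.
have ule i : u i <= 1.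
  by case: (boolP (i \in supp xs)) => Hi; rewrite /u; [rewrite H1 | apply/ltW/H2].
have key (z : 'cV[R]_n) : A *m z = A *m xs ->
    \sum_i w i * u i * z i 0 = \sum_i w i * xs i 0.
  move=> Hz.
  transitivity (\sum_i (\sum_k P k i * c k 0) * z i 0).
    by apply: eq_bigr => i _; rewrite gE.
  rewrite gsum /P -mulmxA Hz mulmxA -gsum.
  apply: eq_bigr => i _; rewrite -gE //.
  case: (boolP (i \in supp xs)) => Hi; first by rewrite H1 // mulr1.
  by move: Hi; rewrite inE negbK => /eqP ->; rewrite !mulr0.
have wl1E (z : 'cV[R]_n) : (forall i, 0 <= z i 0) -> wl1 P z = \sum_i w i * z i 0.
  move=> Hz; apply: eq_bigr => i _; rewrite ger0_norm //.
  by apply: mulr_ge0 => //; apply: ltW.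
have termge (z : 'cV[R]_n) i : 0 <= z i 0 -> 0 <= w i * z i 0 - w i * u i * z i 0.
  move=> Hz; rewrite -mulrA -mulrBr; apply: mulr_ge0; first exact: ltW.
  by rewrite -{1}[z i 0]mul1r -mulrBl; apply: mulr_ge0; rewrite // subr_ge0.
have feas_xs : feasible A (A *m xs) s xs.
  split=> // i; split=> //; apply: le_trans Hs; rewrite lee_fin.
  rewrite (le_trans (ler_norm _)) //.
  exact: (le_bigmax (0:R) (fun i : 'I_n => `|xs i 0|) i).
have sol_xs : is_solution A Ad (A *m xs) s xs.
  split=> // z [Hz Hz0].
  have Hz0' i : 0 <= z i 0 by case: (Hz0 i).
  rewrite wl1E // wl1E // -(key z Hz) -subr_ge0 -sumrB sumr_ge0 // => i _.
  exact: termge.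
split=> // y [[Hy Hy0] Hmin].
have Hy0' i : 0 <= y i 0 by case: (Hy0 i).
have := Hmin xs feas_xs; rewrite wl1E // wl1E // -(key y Hy) => Hle.
have Hsum : \sum_i (w i * y i 0 - w i * u i * y i 0) = 0.
  apply/eqP; rewrite eq_le sumrB subr_le0 Hle /= -sumrB sumr_ge0 // => i _.
  exact: termge.
apply/subsetP => i; apply: contraLR => Hi.
have := psumr_eq0P (fun i _ => termge y i (Hy0' i)) Hsum (erefl true).
move=> /(_ i) /eqP; rewrite -mulrA -mulrBr mulf_eq0 (negbTE (wn0 i)) /=.
rewrite -{1}[y i 0]mul1r -mulrBl mulf_eq0 subr_eq0.
rewrite eq_sym (lt_eqF (H2 i Hi)) /=.
by rewrite inE negbK.
Qed.
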